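(* Let $N$ be a galled tree on $\mathcal{X}$ with at least two galls, let $\mathcal{G}$ be a finite set of genes, let $G:\mathcal{X}\to 2^{\mathcal{G}}$ be a genome assignment and let $k$ be a positive integer. Let $u_1$, $N_1$, $Q_1$ and the extension of $G$ to the leaves $q_1$ and $v_1$ be as in the context. Then $N$ admits a $(G,k)$-gene labelling if and only if each of $N_1$ and $Q_1$ admits a $(G,k)$-gene labelling (with respect to the extended genome assignment on their respective leaf sets).
   Context: A digraph is rooted if it has a vertex $\rho$ of indegree zero such that every vertex is reachable from $\rho$ by a directed path. A phylogenetic network on $\mathcal{X}$ is a rooted acyclic digraph whose root has outdegree at least two, in which every vertex $v$ of outdegree $1$ has indegree at least $2$, and whose set of outdegree-zero vertices (leaves) is $\mathcal{X}$. A galled tree is a phylogenetic network in which any two distinct cycles of the underlying undirected graph have disjoint vertex sets (each such cycle is a gall). A genome assignment is any map from the leaf set to $2^{\mathcal{G}}$. A $(G,k)$-gene labelling of a network $M=(V,A)$ with leaf set $L$ is a map $F:V\to 2^{\mathcal{G}}$ with (I) $F(x)=G(x)$ for all $x\in L$; (II) $|F(v)|\le k$ for all $v\in V$; (III) for each $g\in\mathcal{G}$, the sub-digraph induced by $\{v\in V: g\in F(v)\}$ is rooted. Construction: $u_1$ is a vertex of $N$ such that, for some gall, every vertex of that gall is a descendant of $u_1$ (reachable from $u_1$ by a directed path), and no proper descendant of $u_1$ has this property. $N_1$ is obtained from $N$ by replacing $u_1$ together with all its descendants by a single new leaf $q_1$. $Q_1$ is obtained from $N$ by deleting all vertices that are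 not descendants of $u_1$ and adding a new root $r_1$ with exactly two children, $u_1$ and a new leaf $v_1$. Let $L_{Q_1}$ be the leaf set of $Q_1$, and set $G(q_1)=G(v_1)=\big(\bigcup_{x\in L_{Q_1}\setminus\{v_1\}}G(x)\big)\cap\big(\bigcup_{x\in\mathcal{X}\setminus L_{Q_1}}G(x)\big)$. *)

(* Defs.v *)
From HB Require Import structures.
From mathcomp Require Import all_boot.
Set Implicit Arguments. Unset Strict Implicit. Unset Printing Implicit Defensive.

Section Digraph.
Variables (V : finType) (A : rel V).

Definition indeg (v : V) := #|[set u | A u v]|.
Definition outdeg (v : V) := #|[set w | A v w]|.
Definition is_leaf (v : V) := outdeg v == 0.

Definition desc (u v : V) := connect A u v.

Definition dg_acyclic := forall x y, A x y -> ~~ connect A y x.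
Definition rooted_at (rho : V) := indeg rho = 0 /\ forall v, connect A rho v.
Definition dg_rooted := exists rho, rooted_at rho.

Definition phylo_network :=
  [/\ dg_rooted, dg_acyclic,
      (forall rho, rooted_at rho -> 2 <= outdeg rho) &
      (forall v, outdeg v = 1 -> 2 <= indeg v)].

Definition uadj : rel V := fun x y => A x y || A y x.
Definition gall (c : seq V) := [&& uniq c, 3 <= size c & cycle uadj c].
Definition same_cycle (c1 c2 : seq V) :=
  exists n, c2 = rot n c1 \/ c2 = rot n (rev c1).

Definition galled_tree :=
  phylo_network /\
  forall c1 c2, gall c1 -> gall c2 -> ~ same_cycle c1 c2 -> [disjoint c1 & c2].

Definition gall_below (u : V) := exists c, gall c /\ all (desc u) c.

Definition induced_rel (S : {set V}) : rel V :=
  fun x y => [&& x \in S, y \in S & A x y].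
Definition induced_rooted (S : {set V}) :=
  exists2 rho, rho \in S &
    (forall x, x \in S -> ~~ A x rho) /\
    (forall v, v \in S -> connect (induced_rel S) rho v).

Variable Gene : finType.

Definition gene_labelling (G : V -> {set Gene}) (k : nat) (F : V -> {set Gene}) :=
  [/\ (forall x, is_leaf x -> F x = G x),
      (forall v, #|F v| <= k) &
      (forall g, [set v | g \in F v] != set0 ->
                 induced_rooted [set v | g \in F v])].

Definition admits_labelling (G : V -> {set Gene}) (k : nat) :=
  exists F, gene_labelling G k F.
End Digraph.

Section Construction.
Variables (V : finType) (A : rel V) (Gene : finType) (G : V -> {set Gene}) (u1 : V).

(* N_1 : non-descendants of u1, plus the new leaf q1 = None *)
Definition N1V := option {v : V | ~~ desc A u1 v}.
Definition N1A : rel N1V := fun a b =>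
  match a, b with
  | Some x, Some y => A (val x) (val y)
  | Some x, None => [exists w, desc A u1 w && A (val x) w]
  | None, _ => false
  end.

(* Q_1 : descendants of u1 (inl), plus r1 = inr true and v1 = inr false *)
Definition Q1V := ({v : V | desc A u1 v} + bool)%type.
Definition Q1A : rel Q1V := fun a b =>
  match a, b with
  | inl x, inl y => A (val x) (val y)
  | inr true, inl y => val y == u1
  | inr true, inr false => true
  | _, _ => false
  end.

Definition Gnew : {set Gene} :=
  (\bigcup_(x | is_leaf A x && desc A u1 x) G x) :&:
  (\bigcup_(x | is_leaf A x && ~~ desc A u1 x) G x).

Definition G_N1 (a : N1V) : {set Gene} :=
  match a with Some x => G (val x) | None => Gnew end.
Definition G_Q1 (a : Q1V) : {set Gene} :=
  match a with inl x => G (val x) | inr false => Gnew | inr true => set0 end.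
End Construction.

(* Main.v *)
Require Import Defs.
From HB Require Import structures.
From mathcomp Require Import all_boot.
From Stdlib Require Import Classical.
Set Implicit Arguments. Unset Strict Implicit. Unset Printing Implicit Defensive.

Section Gen.
Variable T : finType.
Implicit Types (e : rel T).

Lemma conn_first e x y : connect e x y -> x != y -> exists2 z, e x z & connect e z y.
Proof.
move=> /connectP [[|z p] /= pp ->]; first by rewrite eqxx.
case/andP: pp => exz pz _; exists z => //; apply/connectP; by exists p.
Qed.

Lemma conn_last e x y : connect e x y -> x != y -> exists2 z, connect e x z & e z y.
Proof.
move=> /connectP [p pp ->]; case/lastP: p pp => [|p z] /=; first by rewrite eqxx.
rewrite rcons_path last_rcons => /andP [pp ez] _; exists (last x p) => //.
by apply/connectP; exists p.
Qed.

Lemma reach_last e x s y : path e x s -> y \in x :: s -> connect e y (last x s).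
Proof.
move=> pp yin; case/splitPl: yin pp => s1 s2 ly; rewrite cat_path last_cat ly => /andP [_ p2].
by apply/connectP; exists s2.
Qed.

Lemma path_uniq e (acyc : forall x y, e x y -> ~~ connect e y x) x s :
  path e x s -> uniq (x :: s).
Proof.
elim: s x => [|y s IH] x //= /andP [exy pys].
have := IH _ pys => /= /andP [-> ->]; rewrite !andbT.
apply/negP => xin.
have := acyc _ _ exy; rewrite (path_connect pys xin); done.
Qed.

Lemma path_suffix e x s pre y suf : path e x s -> x :: s = pre ++ y :: suf ->
  path e y suf /\ last x s = last y suf.
Proof.
case: pre => [|z pre] /= pp; first by case=> <- <-.
case=> ez es; subst z s; move: pp; rewrite cat_path last_cat /= => /andP [_ /andP [_ ->]]; done.
Qed.

Lemma path_prefix e x s pre y suf v : path e x s -> x :: s = pre ++ y :: suf ->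
  v \in pre -> connect e v y.
Proof.
case: pre => [|z pre] //= pp [ez es] vin; subst z s.
move: pp; rewrite -cat_rcons cat_path => /andP [pp _].
have := reach_last pp; rewrite last_rcons; apply.
by rewrite -cats1 -cat_cons mem_cat vin.
Qed.

Lemma conn_fwd (T2 : finType) e (e2 : rel T2) (f : T -> T2) (P : pred T) :
  (forall a b, P a -> e a b -> P b /\ e2 (f a) (f b)) ->
  forall x y, P x -> connect e x y -> connect e2 (f x) (f y).
Proof.
move=> H x y Px /connectP [p pp ->]; elim: p x Px pp => [|z p IH] x Px /=.
  by rewrite connect0.
case/andP=> exz pz; have [Pz e2z] := H _ _ Px exz.
exact: connect_trans (connect1 e2z) (IH _ Pz pz).
Qed.

Lemma conn_bwd (T2 : finType) e (e2 : rel T2) (f : T -> T2) (P : pred T) :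
  (forall a b, P b -> e a b -> P a /\ e2 (f a) (f b)) ->
  forall x y, P y -> connect e x y -> connect e2 (f x) (f y).
Proof.
move=> H x y Py /connectP [p pp ey]; subst y; move: Py.
suff: P (last x p) -> P x /\ connect e2 (f x) (f (last x p)) by move=> h Py; case: (h Py).
elim: p x pp => [|z p IH] x /=; first by rewrite connect0.
case/andP=> exz pz /(IH _ pz) [Pz cz]; have [Px e2x] := H _ _ Pz exz.
by split => //; exact: connect_trans (connect1 e2x) cz.
Qed.

Lemma split_last (a : pred T) (s : seq T) : has a s ->
  exists pre y suf, [/\ s = pre ++ y :: suf, a y & ~~ has a suf].
Proof.
elim: s => [|x s IH] //=; case: (boolP (has a s)) => [/IH [pre [y [suf [-> ay hs]]]] _| hs].
  by exists (x :: pre), y, suf.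
rewrite orbF => ax; by exists [::], x, s.
Qed.

Lemma leafE e x : is_leaf e x <-> forall y, ~~ e x y.
Proof.
rewrite /is_leaf /outdeg cards_eq0; split.
  move=> /eqP H y; apply/negP => exy.
  have : y \in [set w | e x w] by rewrite inE.
  by rewrite H inE.
move=> H; apply/eqP/setP => y; rewrite !inE; exact/negbTE/H.
Qed.

Lemma induced_mem (A : rel T) (S : {set T}) x y : connect (induced_rel A S) x y -> x \in S -> y \in S.
Proof.
move=> c xS; case: (eqVneq x y) => [<- //|ne].
by have [z _ /and3P [_ ->]] := conn_last c ne.
Qed.

Lemma induced_sub (A : rel T) (S : {set T}) x y : connect (induced_rel A S) x y -> connect A x y.
Proof.
apply: (@conn_fwd _ _ _ id predT) => // a b _ /and3P [_ _ ->]; done.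
Qed.
End Gen.

Lemma conn_inv (T : finType) (e : rel T) (P : pred T) :
  (forall a b, P a -> e a b -> P b) -> forall x y, P x -> connect e x y -> P y.
Proof.
move=> H x y Px /connectP [p pp ->]; elim: p x Px pp => [|z p IH] x Px //=.
case/andP=> exz pz; exact: IH _ (H _ _ Px exz) pz.
Qed.


Section Ret.
Variables (V : finType) (A : rel V).
Hypothesis acyc : dg_acyclic A.

Lemma ret (t0 p q w : V) (s1 s2 : seq V) :
 path A t0 s1 -> last t0 s1 = p -> path A t0 s2 -> last t0 s2 = q ->
 A p w -> A q w -> p != q ->
 exists t c, [/\ gall A c, t \in c, p \in c, w \in c &
   [/\ (forall v, v \in c -> connect A t v), t \in t0 :: s1 &
       forall v, v \in t0 :: s2 -> v \notin c -> connect A v t]].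
Proof.
move=> p1 l1 p2 l2 apw aqw npq.
have u1 := path_uniq acyc p1; have u2 := path_uniq acyc p2.
have wP1 : w \notin t0 :: s1.
  apply/negP => win; have := reach_last p1 win; rewrite l1 => c.
  by have := acyc apw; rewrite c.
have wP2 : w \notin t0 :: s2.
  apply/negP => win; have := reach_last p2 win; rewrite l2 => c.
  by have := acyc aqw; rewrite c.
have hh : has (fun v => v \in t0 :: s1) (t0 :: s2) by rewrite /= mem_head.
have [pre [t [post [e2 tin hpost]]]] := split_last hh.
have [pre1 [mid1 e1]] : exists pre1 mid1, t0 :: s1 = pre1 ++ t :: mid1.
  by case/splitPr: tin => pre1 mid1; exists pre1, mid1.
have [pm lm] := path_suffix p1 e1; rewrite l1 in lm.
have [pp lp] := path_suffix p2 e2; rewrite l2 in lp.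
have sub1 : {subset t :: mid1 <= t0 :: s1} by move=> v vin; rewrite e1 mem_cat vin orbT.
have sub2 : {subset t :: post <= t0 :: s2} by move=> v vin; rewrite e2 mem_cat vin orbT.
have npost : forall v, v \in post -> v \notin t0 :: s1.
  by move=> v vin; apply/negP => vin1; move/hasPn: hpost => /(_ v vin); rewrite vin1.
have um : uniq (t :: mid1) by move: u1; rewrite e1 cat_uniq => /and3P [_ _ ->].
have up : uniq (t :: post) by move: u2; rewrite e2 cat_uniq => /and3P [_ _ ->].
exists t, (t :: mid1 ++ w :: rev post).
have cP : {subset t :: post <= t :: mid1 ++ w :: rev post}.
  move=> v; rewrite inE => /orP [/eqP ->|vp]; first exact: mem_head.
  by rewrite -cat_cons mem_cat; apply/orP; right; rewrite in_cons mem_rev vp orbT.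
split.
- apply/and3P; split.
  + rewrite -cat_cons cat_uniq um /= rev_uniq.
    apply/and3P; split; last by case/andP: up.
    * apply/negP => /orP [wm|/hasP [v]].
        by move: wP1; rewrite sub1.
      rewrite mem_rev => vp vm.
      by have := npost _ vp; rewrite sub1.
    * rewrite mem_rev; apply/negP => wpo.
      by move: wP2; rewrite sub2 // inE wpo orbT.
  + have hs : (mid1 != [::]) || (post != [::]).
      case: (eqVneq mid1 [::]) => [m0|]; last by [].
      case: (eqVneq post [::]) => [p0|]; last by rewrite orbT.
      by move: lm lp npq; rewrite m0 p0 /= => -> ->; rewrite eqxx.
    rewrite /= size_cat /= size_rev.
    move: hs; rewrite -!size_eq0; case: (size mid1) => [|m]; case: (size post) => [|r] //= _; rewrite !addSn !addnS //.
  + rewrite /cycle rcons_cat cat_path; apply/andP; split.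
      by apply: sub_path pm => a b ab; rewrite /uadj ab.
    rewrite rcons_cons /= -lm {1}/uadj apw /= -rev_cons lastI rev_rcons /= -lp.
    rewrite {1}/uadj aqw orbT /= lp rev_path.
    by apply: sub_path pp => a b ab; rewrite /uadj ab orbT.
- exact: mem_head.
- by rewrite lm -cat_cons mem_cat mem_last.
- by rewrite -cat_cons mem_cat; apply/orP; right; exact: mem_head.
split.
- move=> v; rewrite -cat_cons mem_cat => /orP [vm|].
    exact: (path_connect pm vm).
  rewrite inE mem_rev => /orP [/eqP ->|vp].
    apply: connect_trans (connect1 apw); rewrite lm.
    exact: (path_connect pm (mem_last _ _)).
  have vp' : v \in t :: post by rewrite inE vp orbT.
  exact: (path_connect pp vp').
- by apply: sub1; exact: mem_head.
- move=> v; rewrite e2 mem_cat => /orP [vpre _|vp].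
    exact: path_prefix p2 e2 vpre.
  by rewrite cP.
Qed.
End Ret.


Section Sink.
Variables (V : finType) (A : rel V).
Hypothesis acyc : dg_acyclic A.

Lemma sink c : gall A c -> exists z a b,
  [/\ z \in c, a \in c, b \in c, a != b & A a z /\ A b z].
Proof.
case/and3P=> uc sc cc.
have [x0 x0c] : exists x, x \in c.
  by case: c uc sc cc => [|x c'] //; exists x; rewrite mem_head.
case: (arg_minnP (P := fun v => v \in c) (fun v => #|[set y | connect A v y]|) x0c).
move=> z zc zmin.
have noout : forall y, y \in c -> ~~ A z y.
  move=> y yc; apply/negP => azy; have := zmin y yc; rewrite leqNgt => /negP; apply.
  apply: proper_card; apply/properP; split.
    apply/subsetP => v; rewrite !inE => cyv; exact: connect_trans (connect1 azy) cyv.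
  exists z; rewrite !inE ?connect0 //; apply/negP => cyz.
  by have := acyc azy; rewrite cyz.
have [rest hr] : exists rest, rot (index z c) c = z :: rest by exists (drop (index z c).+1 c ++ take (index z c) c); exact: rot_index.
have cyc : cycle (uadj A) (z :: rest) by rewrite -hr rot_cycle.
have uq : uniq (z :: rest) by rewrite -hr rot_uniq.
have sz : size (z :: rest) = size c by rewrite -hr size_rot.
have mc : forall y, y \in z :: rest -> y \in c by move=> y; rewrite -hr mem_rot.
case: rest hr cyc uq sz mc => [|a [|y r]] hr cyc uq sz mc.
- by rewrite -sz in sc.
- by rewrite -sz in sc.
move: cyc; rewrite /= rcons_path => /and4P [uza _ _ ubz].
have ac : a \in c by apply: mc; rewrite !inE eqxx orbT.
have bc : last y r \in c by apply: mc; rewrite in_cons; apply/orP; right; rewrite in_cons; apply/orP; right; exact: mem_last.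
exists z, a, (last y r); split => //.
  case/and3P: uq => _ anr _; apply/negP => /eqP ab.
  by move: anr; rewrite ab mem_last.
move: uza ubz; rewrite /uadj (negbTE (noout _ ac)) (negbTE (noout _ bc)) orbF /=.
by move=> -> ->.
Qed.
End Sink.


Section GT.
Variables (V : finType) (A : rel V) (u1 : V).
Hypothesis gt : galled_tree A.
Hypothesis gb : gall_below A u1.
Hypothesis minim : forall w, desc A u1 w -> w != u1 -> ~ gall_below A w.

Lemma gt_acyc : dg_acyclic A.
Proof. by case: gt => [[]]. Qed.

Lemma share c1 c2 x : gall A c1 -> gall A c2 -> x \in c1 -> x \in c2 -> c1 =i c2.
Proof.
move=> g1 g2 x1 x2; case: (classic (same_cycle c1 c2)) => [[n [->|->]] y | ns].
- by rewrite mem_rot.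
- by rewrite mem_rot mem_rev.
- have dj := gt.2 c1 c2 g1 g2 ns; by rewrite (disjointFr dj x1) in x2.
Qed.

Lemma u1_gall : exists c, [/\ gall A c, u1 \in c & all (desc A u1) c].
Proof.
have acyc := gt_acyc.
case: gb => c' [gc' dc'].
have [z [a [b [zc ac bc nab [az bz]]]]] := sink acyc gc'.
have /connectP [s1 ps1 l1] : desc A u1 a by move/allP: dc' => /(_ a ac).
have /connectP [s2 ps2 l2] : desc A u1 b by move/allP: dc' => /(_ b bc).
have [t [c'' [g'' tin pin win [sub tin1 _]]]] := ret acyc ps1 (esym l1) ps2 (esym l2) az bz nab.
have ez := share gc' g'' zc win.
have dt : desc A u1 t := path_connect ps1 tin1.
case: (eqVneq t u1) => [etu | ntu].
- by exists c'; split => //; rewrite ez -etu.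
- exfalso; apply: (minim dt ntu); exists c''; split => //; apply/allP => v vin; exact: sub.
Qed.

Lemma entry x w : A x w -> ~~ desc A u1 x -> desc A u1 w -> w = u1.
Proof.
have acyc := gt_acyc.
move=> axw ndx dw; apply/eqP; apply/negPn/negP => nw.
have nw' : u1 != w by rewrite eq_sym.
have [q cq aqw] := conn_last dw nw'.
case: gt => [[[rho [_ rr]] _ _ _] _].
have /connectP [s1 ps1 l1] := rr x.
have /connectP [sa psa la] := rr u1.
have /connectP [sb psb lb] := cq.
have ps2 : path A rho (sa ++ sb) by rewrite cat_path psa -la psb.
have l2 : last rho (sa ++ sb) = q by rewrite last_cat -la.
have u1in : u1 \in rho :: sa ++ sb by rewrite -cat_cons mem_cat la mem_last.
have nxq : x != q by apply/negP => /eqP exq; move: ndx; rewrite exq /desc cq.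
have [t [c [gc tc xc wc [sub tin1 pre]]]] := ret acyc ps1 (esym l1) ps2 l2 axw aqw nxq.
have u1c : u1 \in c.
  apply/negPn/negP => nu; have cut := pre _ u1in nu; have ctx := sub x xc.
  by move: ndx; rewrite /desc (connect_trans cut ctx).
have [c0 [g0 u0 d0]] := u1_gall.
have e := share gc g0 u1c u0.
have x0 : x \in c0 by rewrite -e.
by move/allP: d0 => /(_ x x0); rewrite (negbTE ndx).
Qed.
End GT.


Section Main.
Variables (V : finType) (A : rel V) (Gene : finType) (G : V -> {set Gene}) (k : nat) (u1 : V).
Hypothesis acyc : dg_acyclic A.
Hypothesis entryH : forall x w, A x w -> ~~ desc A u1 x -> desc A u1 w -> w = u1.

Local Notation D := (desc A u1).
Local Notation N1 := (@N1A V A u1).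
Local Notation Q1 := (@Q1A V A u1).

Lemma Dclosed x y : D x -> A x y -> D y.
Proof. by move=> dx axy; exact: connect_trans dx (connect1 axy). Qed.

Lemma Du1 : D u1.
Proof. exact: connect0. Qed.

Lemma exD x : D x -> exists y : {v | D v}, x = val y.
Proof. by move=> dx; exists (exist _ x dx). Qed.

Lemma exND x : ~~ D x -> exists y : {v | ~~ D v}, x = val y.
Proof. by move=> dx; exists (exist _ x dx). Qed.

Lemma leafN1 (x : {v | ~~ D v}) : is_leaf N1 (Some x) <-> is_leaf A (val x).
Proof.
split=> /leafE H; apply/leafE => y.
  apply/negP => axy; case: (boolP (D y)) => dy.
    have := H None; rewrite /N1A => /existsPn /(_ y); by rewrite dy axy.
  by have := H (Some (exist _ y dy)); rewrite /= axy.
case: y => [y|] /=; first exact: H.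
by apply/existsPn => w; rewrite (negbTE (H w)) andbF.
Qed.

Lemma leafQ1 (x : {v | D v}) : is_leaf Q1 (inl x) <-> is_leaf A (val x).
Proof.
split=> /leafE H; apply/leafE => y.
  apply/negP => axy; have dy := Dclosed (valP x) axy.
  by have := H (inl (exist _ y dy)); rewrite /= axy.
by case: y => [y|[]] //=; exact: H.
Qed.

Lemma leafNone : is_leaf N1 None.
Proof. by apply/leafE. Qed.

Lemma leafv1 : is_leaf Q1 (inr false).
Proof. by apply/leafE => -[]. Qed.

Lemma nleafr1 : ~ is_leaf Q1 (inr true).
Proof. by move/leafE => /(_ (inr false)). Qed.

Definition embQ (v : V) : @Q1V V A u1 :=
  match insub v with Some y => inl y | None => inr false end.

Lemma embQ_val (y : {v | D v}) : embQ (val y) = inl y.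
Proof. by rewrite /embQ valK. Qed.

Lemma cross (S : {set V}) x y : connect (induced_rel A S) x y -> ~~ D x -> D y ->
  exists z, [/\ ~~ D z, connect (induced_rel A S) x z, induced_rel A S z u1
              & connect (induced_rel A S) u1 y].
Proof.
move=> /connectP [p pp ->]; elim: p x pp => [|z p IH] x /=.
  by move=> _ nd d; rewrite d in nd.
case/andP => exz pz ndx dl; case: (boolP (D z)) => dz.
  have ez : z = u1 by apply: entryH ndx dz; case/and3P: exz.
  exists x; split => //; first by rewrite -ez.
  by apply/connectP; exists p; rewrite -?ez.
have [z' [nz cz iz cu]] := IH z pz dz dl.
exists z'; split => //; exact: connect_trans (connect1 exz) cz.
Qed.

Local Notation Gn := (@Gnew V A Gene G u1).

Section Fwd.
Variable F : V -> {set Gene}.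
Hypothesis HF : gene_labelling A G k F.

Lemma Gnew_sub : Gn \subset F u1.
Proof.
case: HF => Fl Fk Fr.
apply/subsetP => g; rewrite /Gnew inE => /andP [/bigcupP [a /andP [la da] ga] /bigcupP [b /andP [lb db] gb]].
have ne : [set v | g \in F v] != set0 by apply/set0Pn; exists b; rewrite inE Fl.
case: (Fr g ne) => rho rS [nin reach].
have rb := reach b ltac:(by rewrite inE Fl).
have ndr : ~~ D rho.
  apply/negP => dr; move: db; rewrite /desc (connect_trans dr (induced_sub rb)) //.
have ra := reach a ltac:(by rewrite inE Fl).
have [z [_ _ /and3P [_ u1S _] _]] := cross ra ndr da.
by rewrite inE in u1S.
Qed.

Definition F1f (a : N1V A u1) : {set Gene} :=
  match a with Some x => F (val x) | None => Gn end.
Definition F2f (a : @Q1V V A u1) : {set Gene} :=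
  match a with inl x => F (val x) | inr _ => Gn end.

Lemma Gnk : #|Gn| <= k.
Proof. case: HF => _ Fk _; exact: leq_trans (subset_leq_card Gnew_sub) (Fk u1). Qed.

Lemma fwdN1 : gene_labelling N1 (@G_N1 V A Gene G u1) k F1f.
Proof.
case: HF => Fl Fk Fr; split.
- by case=> [x|] //= /leafN1 /Fl.
- by case=> [x|] /=; [exact: Fk | exact: Gnk].
move=> g ne1.
have hS : [set v | g \in F v] != set0.
  case/set0Pn: ne1 => -[x|]; rewrite inE /= => gx; apply/set0Pn.
    by exists (val x); rewrite inE.
  by exists u1; rewrite inE (subsetP Gnew_sub).
case: (Fr g hS) => rho rS [nin reach].
case: (boolP (D rho)) => dr.
  exfalso; case/set0Pn: ne1 => -[x|]; rewrite inE /= => gx.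
    have := induced_sub (reach (val x) ltac:(by rewrite inE)).
    move=> c; have := valP x; by rewrite /desc (connect_trans dr c).
  move: gx; rewrite /Gnew inE => /andP [_ /bigcupP [b /andP [lb db] gb]].
  have := induced_sub (reach b ltac:(by rewrite inE Fl)).
  by move=> c; move: db; rewrite /desc (connect_trans dr c).
have [r er] := exND dr; subst rho.
exists (Some r); first by rewrite inE /=; rewrite inE in rS.
have H : forall a b, ~~ D b -> induced_rel A [set v | g \in F v] a b ->
    ~~ D a /\ induced_rel N1 [set a | g \in F1f a] (insub a) (insub b).
  move=> a b ndb /and3P [aS bS ab].
  have nda : ~~ D a by apply/negP => da; move: ndb; rewrite (Dclosed da ab).
  split => //; rewrite (insubT (fun v => ~~ D v) nda) (insubT (fun v => ~~ D v) ndb) /induced_rel !inE /=.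
  by rewrite inE in aS; rewrite inE in bS; rewrite aS bS ab.
split.
- case=> [y|] //; rewrite inE /= => gy; apply: nin; by rewrite inE.
- case=> [y|]; rewrite inE /= => gy.
    have := conn_bwd H (valP y) (reach (val y) ltac:(by rewrite inE)).
    by rewrite !valK.
  have u1S : u1 \in [set v | g \in F v] by rewrite inE (subsetP Gnew_sub).
  have [z [ndz cz /and3P [zS _ az] _]] := cross (reach u1 u1S) (valP r) Du1.
  apply: (connect_trans (y := insub z)).
    by have := conn_bwd H ndz cz; rewrite valK.
  apply: connect1; rewrite (insubT (fun v => ~~ D v) ndz) /induced_rel !inE /=.
  rewrite inE in zS; rewrite zS /=; move: gy; rewrite /Gnew inE => -> /=; apply/existsP; exists u1; by rewrite Du1 az.
Qed.

Lemma fwdQ1 : gene_labelling Q1 (@G_Q1 V A Gene G u1) k F2f.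
Proof.
case: HF => Fl Fk Fr; split.
- case=> [x|[]] /=; [by move/leafQ1/Fl | by move/nleafr1 | by []].
- case=> [x|b] /=; [exact: Fk | exact: Gnk].
move=> g ne2.
set S := [set v | g \in F v].
pose u1' : {v | D v} := exist _ u1 Du1.
have eQ : embQ u1 = inl u1' := embQ_val u1'.
have Hf : forall a b, D a -> induced_rel A S a b ->
    D b /\ induced_rel Q1 [set a | g \in F2f a] (embQ a) (embQ b).
  move=> a b da /and3P [aS bS ab]; have db := Dclosed da ab; split => //.
  have [a' ea] := exD da; have [b' eb] := exD db; subst a b.
  rewrite !embQ_val /induced_rel !inE /=.
  by rewrite inE in aS; rewrite inE in bS; rewrite aS bS.
case: (boolP (g \in Gn)) => gG.
- exists (inr true); first by rewrite inE.
  split.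
  + by move=> [x|[]].
  + move=> [y|[]]; rewrite inE /= => gy.
    * have yS : val y \in S by rewrite inE.
      have hS : S != set0 by apply/set0Pn; exists (val y).
      case: (Fr g hS) => rho rS [nin reach].
      have ndr : ~~ D rho.
        apply/negP => dr; move: gG; rewrite /Gnew inE => /andP [_ /bigcupP [b /andP [lb db] gb]].
        have := induced_sub (reach b ltac:(by rewrite inE Fl)).
        by move=> c; move: db; rewrite /desc (connect_trans dr c).
      have [z [_ _ /and3P [_ u1S _] cu]] := cross (reach _ yS) ndr (valP y).
      apply: (connect_trans (y := inl u1')).
        apply: connect1; rewrite /induced_rel !inE /= eqxx andbT.
        by move: gG; rewrite /Gnew inE => -> /=; rewrite inE in u1S.
      by have := conn_fwd Hf Du1 cu; rewrite eQ embQ_val.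
    * first [exact: connect0 | apply: connect1; rewrite /induced_rel !inE /=; by move: gG; rewrite /Gnew inE => ->].
    * first [exact: connect0 | apply: connect1; rewrite /induced_rel !inE /=; by move: gG; rewrite /Gnew inE => ->].
case/set0Pn: ne2 => -[y0|b]; rewrite inE /= => gy0; last by rewrite gy0 in gG.
have y0S : val y0 \in S by rewrite inE.
have hS : S != set0 by apply/set0Pn; exists (val y0).
case: (Fr g hS) => rho rS [nin reach].
case: (boolP (D rho)) => dr.
- have [r er] := exD dr; subst rho.
  exists (inl r); first by rewrite inE /=; rewrite inE in rS.
  split.
  + move=> [y|b]; rewrite inE /= => gy; last by rewrite gy in gG.
    by apply: nin; rewrite inE.
  + move=> [y|b]; rewrite inE /= => gy; last by rewrite gy in gG.
    have := conn_fwd Hf (valP r) (reach (val y) ltac:(by rewrite inE)).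
    by rewrite !embQ_val.
- have [z [_ _ /and3P [_ u1S _] _]] := cross (reach _ y0S) dr (valP y0).
  exists (inl u1'); first by rewrite inE /=; rewrite inE in u1S.
  split.
  + move=> [y|b]; rewrite inE /= => gy; last by rewrite gy in gG.
    apply/negP => ay; by have := acyc ay; move/negP; apply; exact: (valP y).
  + move=> [y|b]; rewrite inE /= => gy; last by rewrite gy in gG.
    have [z' [_ _ _ cu]] := cross (reach (val y) ltac:(by rewrite inE)) dr (valP y).
    by have := conn_fwd Hf Du1 cu; rewrite eQ embQ_val.
Qed.
End Fwd.

Lemma QL (S2 : {set @Q1V V A u1}) : induced_rooted Q1 S2 -> forall x0, inl x0 \in S2 ->
  exists r : {v | D v}, [/\ inl r \in S2,
    (forall y, inl y \in S2 -> connect (induced_rel Q1 S2) (inl r) (inl y)),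
    (forall y, inl y \in S2 -> ~~ A (val y) (val r)) &
    (inr false \in S2 -> val r = u1)].
Proof.
case=> rho rin [nin reach] x0 x0S.
have cfalse : forall b, connect (induced_rel Q1 S2) (inr false) b -> b = inr false.
  move=> b c; case: (eqVneq (inr false) b) => [->//|nb].
  by have [z /and3P [_ _ fz] _] := conn_first c nb; case: z fz.
have cinl : forall x b, connect (induced_rel Q1 S2) (inl x) b -> exists y, b = inl y.
  move=> x b c.
  pose P := fun a : @Q1V V A u1 => if a is inl _ then true else false.
  have H : forall a b, P a -> induced_rel Q1 S2 a b -> P b.
    by case=> [a'|//] [b'|[]] _ // /and3P [].
  have := conn_inv H (x := inl x) (y := b) isT c.
  by case: b {c} => [y _|//]; exists y.
case: rho rin nin reach => [r|[]] rin nin reach.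
- exists r; split => //.
  + move=> y yS; exact: reach.
  + move=> y yS; exact: (nin (inl y) yS).
  + by move=> fS; have [y] := cinl _ _ (reach _ fS).
- have st : forall y, inl y \in S2 -> exists z : {v | D v},
      [/\ val z = u1, inl z \in S2 & connect (induced_rel Q1 S2) (inl z) (inl y)].
    move=> y yS; have [z /and3P [_ zS az] cz] := conn_first (reach _ yS) isT.
    case: z zS az cz => [z|[]] zS az cz //.
      by exists z; split => //; exact/eqP.
    by have := cfalse _ cz.
  have [z [ez zS _]] := st _ x0S.
  exists z; split => //.
  + move=> y yS; have [z' [ez' _ cz']] := st _ yS.
    have e : z' = z by apply: val_inj; rewrite ez ez'.
    by rewrite -e.
  + move=> y yS; apply/negP => ay; rewrite ez in ay.
    by have := acyc ay; move/negP; apply; exact: (valP y).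
- by have := cfalse _ (reach _ x0S).
Qed.

Lemma NL (S1 : {set N1V A u1}) : induced_rooted N1 S1 -> forall x0, Some x0 \in S1 ->
  exists r : {v | ~~ D v}, [/\ Some r \in S1,
    (forall y, Some y \in S1 -> connect (induced_rel N1 S1) (Some r) (Some y)),
    (forall y, Some y \in S1 -> ~~ A (val y) (val r)) &
    (None \in S1 -> exists x, [/\ Some x \in S1,
        connect (induced_rel N1 S1) (Some r) (Some x) & A (val x) u1])].
Proof.
case=> rho rin [nin reach] x0 x0S.
case: rho rin nin reach => [r|] rin nin reach; last first.
  by have [z /and3P [_ _ []]] := conn_first (reach _ x0S) isT.
exists r; split => //.
- move=> y yS; exact: reach.
- move=> y yS; exact: (nin (Some y) yS).
move=> nS; have [z cz /and3P [zS _ az]] := conn_last (reach _ nS) isT.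
case: z cz zS az => [z|] cz zS az //.
case/existsP: az => w /andP [dw azw].
have ew := entryH azw (valP z) dw; subst w.
by exists z.
Qed.
Section Bwd.
Variables (F1 : N1V A u1 -> {set Gene}) (F2 : @Q1V V A u1 -> {set Gene}).
Hypothesis H1 : gene_labelling N1 (@G_N1 V A Gene G u1) k F1.
Hypothesis H2 : gene_labelling Q1 (@G_Q1 V A Gene G u1) k F2.

Definition Lin := \bigcup_(x | is_leaf A x && D x) G x.
Definition Lout := \bigcup_(x | is_leaf A x && ~~ D x) G x.
Definition Fb (v : V) : {set Gene} :=
  if D v then F2 (embQ v) :&: Lin else F1 (insub v) :&: Lout.

Definition isSm (a : N1V A u1) : bool := if a is Some _ then true else false.
Definition fN (a : N1V A u1) : V := if a is Some y then val y else u1.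
Definition isIn (a : @Q1V V A u1) : bool := if a is inl _ then true else false.
Definition fQ (a : @Q1V V A u1) : V := if a is inl y then val y else u1.

Lemma F1None : F1 None = Gn.
Proof. by case: H1 => l _ _; exact: (l None leafNone). Qed.
Lemma F2v1 : F2 (inr false) = Gn.
Proof. by case: H2 => l _ _; exact: (l (inr false) leafv1). Qed.
Lemma Fbd (y : {v | D v}) : Fb (val y) = F2 (inl y) :&: Lin.
Proof. by rewrite /Fb (valP y) embQ_val. Qed.
Lemma Fbn (y : {v | ~~ D v}) : Fb (val y) = F1 (Some y) :&: Lout.
Proof. by rewrite /Fb (negbTE (valP y)) valK. Qed.

Lemma bwd : gene_labelling A G k Fb.
Proof.
case: H1 => l1 k1 r1; case: H2 => l2 k2 r2.
split.
- move=> x lx; case: (boolP (D x)) => dx.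
  + have [y ey] := exD dx; subst x; rewrite Fbd.
    have ly : is_leaf Q1 (inl y) by apply/leafQ1.
    rewrite (l2 _ ly) /=; apply/setIidPl; apply: (bigcup_sup (val y)).
    by rewrite lx (valP y).
  + have [y ey] := exND dx; subst x; rewrite Fbn.
    have ly : is_leaf N1 (Some y) by apply/leafN1.
    rewrite (l1 _ ly) /=; apply/setIidPl; apply: (bigcup_sup (val y)).
    by rewrite lx (valP y).
- move=> v; rewrite /Fb; case: (D v).
    exact: leq_trans (subset_leq_card (subsetIl _ _)) (k2 _).
  exact: leq_trans (subset_leq_card (subsetIl _ _)) (k1 _).
move=> g neS.
set S := [set v | g \in Fb v].
set S1 := [set a | g \in F1 a].
set S2 := [set a | g \in F2 a].
have memSd : forall y : {v | D v}, (val y \in S) = (inl y \in S2) && (g \in Lin).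
  by move=> y; rewrite !inE Fbd inE.
have memSn : forall y : {v | ~~ D v}, (val y \in S) = (Some y \in S1) && (g \in Lout).
  by move=> y; rewrite !inE Fbn inE.
have HB : g \in Lout -> forall a b, isSm b ->
    induced_rel N1 S1 a b -> isSm a /\ induced_rel A S (fN a) (fN b).
  move=> gO [a'|] [b'|] // _ /and3P [aS bS ab]; split => //.
  by rewrite /induced_rel !memSn aS bS gO; exact: ab.
have HF : g \in Lin -> forall a b, isIn a ->
    induced_rel Q1 S2 a b -> isIn b /\ induced_rel A S (fQ a) (fQ b).
  move=> gI [a'|?] // [b'|?] _ /and3P [aS bS ab] //; split => //.
  by rewrite /induced_rel !memSd aS bS gI; exact: ab.
case: (boolP (g \in Lout)) => gO.
- have [b /andP [lb db] gb] := bigcupP gO.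
  have [b' eb] := exND db; subst b.
  have bS1 : Some b' \in S1.
    have ly : is_leaf N1 (Some b') by apply/leafN1.
    by rewrite inE (l1 _ ly).
  have ne1 : S1 != set0 by apply/set0Pn; exists (Some b').
  have [r [rS1 reach1 nin1 none1]] := NL (r1 g ne1) bS1.
  exists (val r); first by rewrite memSn rS1 gO.
  split.
  + move=> y yS; apply/negP => ay; case: (boolP (D y)) => dy.
      by have := Dclosed dy ay; rewrite (negbTE (valP r)).
    have [y' ey] := exND dy; subst y.
    rewrite memSn in yS; case/andP: yS => yS _.
    by have := nin1 y' yS; rewrite ay.
  + move=> v vS; case: (boolP (D v)) => dv.
    * have [v' ev] := exD dv; subst v.
      rewrite memSd in vS; case/andP: vS => vS2 gI.
      have gN : g \in Gn by rewrite /Gnew inE -/Lin -/Lout gI gO.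
      have nS1 : None \in S1 by rewrite inE F1None.
      have fS2 : inr false \in S2 by rewrite inE F2v1.
      have ne2 : S2 != set0 by apply/set0Pn; exists (inr false).
      have [rq [rqS reach2 _ e2]] := QL (r2 g ne2) vS2.
      have er2 := e2 fS2.
      have [x [xS cx ax]] := none1 nS1.
      apply: (connect_trans (y := val x)).
        exact: (conn_bwd (HB gO) (x := Some r) (y := Some x) isT cx).
      apply: (connect_trans (y := u1)).
        have u1S : val rq \in S by rewrite memSd rqS gI.
        rewrite er2 in u1S.
        by apply: connect1; rewrite /induced_rel memSn xS gO u1S /=.
      by have := conn_fwd (HF gI) (x := inl rq) (y := inl v') isT (reach2 _ vS2); rewrite /= er2.
    * have [v' ev] := exND dv; subst v.
      rewrite memSn in vS; case/andP: vS => vS1 _.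
      exact: (conn_bwd (HB gO) (x := Some r) (y := Some v') isT (reach1 _ vS1)).
- case/set0Pn: neS => v0 v0S.
  have dv0 : D v0.
    apply/negPn/negP => nd; have [v' ev] := exND nd; subst v0.
    by rewrite memSn (negbTE gO) andbF in v0S.
  have [v0' ev] := exD dv0; subst v0.
  rewrite memSd in v0S; case/andP: v0S => v0S2 gI.
  have ne2 : S2 != set0 by apply/set0Pn; exists (inl v0').
  have [r [rS2 reach2 nin2 _]] := QL (r2 g ne2) v0S2.
  have SD : forall y, y \in S -> D y.
    move=> y yS; apply/negPn/negP => nd; have [y' ey] := exND nd; subst y.
    by rewrite memSn (negbTE gO) andbF in yS.
  exists (val r); first by rewrite memSd rS2 gI.
  split.
  + move=> y yS; have [y' ey] := exD (SD _ yS); subst y.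
    rewrite memSd in yS; case/andP: yS => yS _; exact: nin2.
  + move=> y yS; have [y' ey] := exD (SD _ yS); subst y.
    rewrite memSd in yS; case/andP: yS => yS _.
    exact: (conn_fwd (HF gI) (x := inl r) (y := inl y') isT (reach2 _ yS)).
Qed.
End Bwd.
End Main.


Theorem lemma5p4 (V : finType) (A : rel V) (Gene : finType)
  (G : V -> {set Gene}) (k : nat) (u1 : V) :
  galled_tree A ->
  (exists c1 c2, [/\ gall A c1, gall A c2 & ~ same_cycle c1 c2]) ->
  0 < k ->
  gall_below A u1 ->
  (forall w, desc A u1 w -> w != u1 -> ~ gall_below A w) ->
  (admits_labelling A G k <->
   admits_labelling (@N1A V A u1) (@G_N1 V A Gene G u1) k /\
   admits_labelling (@Q1A V A u1) (@G_Q1 V A Gene G u1) k).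
Proof.
move=> gt _ _ gb minim.
have acyc := gt_acyc gt.
have entryH := entry gt gb minim.
split.
- case=> F HF; split.
    by eexists; exact: (fwdN1 entryH HF).
  by eexists; exact: (fwdQ1 acyc entryH HF).
- case=> [[F1 h1] [F2 h2]].
  by eexists; exact: (bwd acyc entryH h1 h2).
Qed.
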